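(* Let $n\ge 2$, let $i,j\in\{1,\dots,n-1\}$, let $m\ge 1$ be an integer, and let $W\in B_n^+$. If $W\sigma_i^m=\sigma_j^m W$ in $B_n$, then $W\sigma_i=\sigma_j W$ in $B_n$.
   Context: $B_n$ is Artin's braid group with generators $\sigma_1,\dots,\sigma_{n-1}$ and relations $\sigma_i\sigma_j=\sigma_j\sigma_i$ for $|i-j|\ge 2$ and $\sigma_i\sigma_{i+1}\sigma_i=\sigma_{i+1}\sigma_i\sigma_{i+1}$. $B_n^+$ is the submonoid of $B_n$ of elements representable by positive braid words, i.e. words in $\sigma_1,\dots,\sigma_{n-1}$ without inverses. *)

(* Defs.v *)
From mathcomp Require Import all_boot.
Set Implicit Arguments. Unset Strict Implicit. Unset Printing Implicit Defensive.

(* Artin generators of B_n: k : 'I_n.-1 encodes sigma_(k+1), so the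
   generators sigma_1, ..., sigma_(n-1) are exactly the elements of 'I_n.-1.
   A letter (k, true) is sigma_(k+1), (k, false) is its inverse. *)
Definition bletter (n : nat) := ('I_n.-1 * bool)%type.
Definition bword (n : nat) := seq (bletter n).

Definition binv n (x : bletter n) : bletter n := (x.1, ~~ x.2).

Inductive braid_rel (n : nat) : bword n -> bword n -> Prop :=
| brel_cancel (x : bletter n) : braid_rel [:: x; binv x] [::]
| brel_comm (i j : 'I_n.-1) : (i.+2 <= j)%N || (j.+2 <= i)%N ->
    braid_rel [:: (i, true); (j, true)] [:: (j, true); (i, true)]
| brel_braid (i j : 'I_n.-1) : nat_of_ord j = i.+1 ->
    braid_rel [:: (i, true); (j, true); (i, true)]
              [:: (j, true); (i, true); (j, true)].

Inductive braid_eq (n : nat) : bword n -> bword n -> Prop :=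
| beq_refl w : braid_eq w w
| beq_sym u v : braid_eq u v -> braid_eq v u
| beq_trans u v w : braid_eq u v -> braid_eq v w -> braid_eq u w
| beq_rel (u v a b : bword n) : braid_rel a b ->
    braid_eq (u ++ a ++ v) (u ++ b ++ v).

Definition pos_word n (w : seq 'I_n.-1) : bword n := [seq (k, true) | k <- w].

(* Main.v *)
Require Import Defs.
From mathcomp Require Import all_boot zify.
Set Implicit Arguments. Unset Strict Implicit. Unset Printing Implicit Defensive.

Definition far (a b : nat) := (a.+2 <= b) || (b.+2 <= a).
Definition adj (a b : nat) := (b == a.+1) || (a == b.+1).

Lemma trich a b : [\/ a = b, far a b | adj a b].
Proof. have : (a = b) \/ (far a b) \/ adj a b by rewrite /far /adj; lia.
by case=> [|[]]; [constructor 1|constructor 2|constructor 3]. Qed.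
Lemma far_sym a b : far a b -> far b a. Proof. rewrite /far; lia. Qed.
Lemma adj_sym a b : adj a b -> adj b a. Proof. rewrite /adj; lia. Qed.
Lemma far_irr a : far a a -> False. Proof. rewrite /far; lia. Qed.
Lemma adj_irr a : adj a a -> False. Proof. rewrite /adj; lia. Qed.

Inductive step : seq nat -> seq nat -> Prop :=
| st_comm u v a b : far a b -> step (u ++ a :: b :: v) (u ++ b :: a :: v)
| st_braid u v a b : adj a b -> step (u ++ a :: b :: a :: v) (u ++ b :: a :: b :: v).

Inductive peq : seq nat -> seq nat -> Prop :=
| pe_refl s : peq s s
| pe_step s t u : step s t -> peq t u -> peq s u.

Lemma peq_trans s t u : peq s t -> peq t u -> peq s u.
Proof. elim=> [//|{}s t0 u0 st _ IH /IH]; exact: pe_step. Qed.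

Lemma step_sym s t : step s t -> step t s.
Proof. case=> u v a b H; [exact: (st_comm u v (far_sym H)) | exact: (st_braid u v (adj_sym H))]. Qed.

Lemma peq1 s t : step s t -> peq s t.
Proof. by move=> H; apply: pe_step H (pe_refl _). Qed.

Lemma peq_sym s t : peq s t -> peq t s.
Proof. elim=> [s0|{}s t0 u0 st _ IH]; first exact: pe_refl. apply: peq_trans IH _; exact/peq1/step_sym. Qed.

Lemma step_app x y s t : step s t -> step (x ++ s ++ y) (x ++ t ++ y).
Proof.
case=> u v a b H.
- have E : forall p q, x ++ (u ++ p :: q :: v) ++ y = (x ++ u) ++ p :: q :: (v ++ y).
    by move=> p q; rewrite -!catA.
  rewrite !E; exact: st_comm.
- have E : forall p q, x ++ (u ++ p :: q :: p :: v) ++ y = (x ++ u) ++ p :: q :: p :: (v ++ y).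
    by move=> p q; rewrite -!catA.
  rewrite !E; exact: st_braid.
Qed.

Lemma peq_app x y s t : peq s t -> peq (x ++ s ++ y) (x ++ t ++ y).
Proof. elim=> [s0|{}s t0 u0 st _ IH]; first exact: pe_refl. apply: pe_step IH; exact: step_app. Qed.

Lemma peq_catl x s t : peq s t -> peq (x ++ s) (x ++ t).
Proof. by move=> /(peq_app x [::]); rewrite !cats0. Qed.
Lemma peq_catr y s t : peq s t -> peq (s ++ y) (t ++ y).
Proof. by move=> /(peq_app [::] y). Qed.
Lemma peq_cons x s t : peq s t -> peq (x :: s) (x :: t).
Proof. exact: (peq_catl [:: x]). Qed.
Lemma peq_cat s t s' t' : peq s t -> peq s' t' -> peq (s ++ s') (t ++ t').
Proof. move=> H1 H2; apply: peq_trans (peq_catr _ H1) (peq_catl _ H2). Qed.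

Lemma sw x y s : far x y -> peq (x :: y :: s) (y :: x :: s).
Proof. by move=> H; apply: peq1; apply: (st_comm [::]). Qed.
Lemma br x y s : adj x y -> peq (x :: y :: x :: s) (y :: x :: y :: s).
Proof. by move=> H; apply: peq1; apply: (st_braid [::]). Qed.

Lemma size_step s t : step s t -> size s = size t.
Proof. by case=> u v a b _; rewrite !size_cat. Qed.
Lemma size_peq s t : peq s t -> size s = size t.
Proof. by elim=> [//|{}s t0 u0 /size_step ->]. Qed.

Lemma step_rev s t : step s t -> step (rev s) (rev t).
Proof.
case=> u v a b H; rewrite !rev_cat !rev_cons -!cats1 -!catA /=.
- by apply: st_comm; exact: far_sym.
- by apply: st_braid.
Qed.
Lemma peq_rev s t : peq s t -> peq (rev s) (rev t).
Proof. elim=> [s0|{}s t0 u0 /step_rev H _ IH]; first exact: pe_refl. exact: pe_step H IH. Qed.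

Definition R a b X Y :=
 [/\ a = b -> peq X Y,
     far a b -> exists Z, peq X (b::Z) /\ peq Y (a::Z)
   & adj a b -> exists Z, peq X (b::a::Z) /\ peq Y (a::b::Z)].

Definition S d := forall a b X Y, size X = d -> peq (a::X) (b::Y) -> R a b X Y.

Lemma R_sym a b X Y : R a b X Y -> R b a Y X.
Proof.
case=> H1 H2 H3; split.
- by move=> E; apply/peq_sym/H1.
- by move/far_sym/H2=> [Z [? ?]]; exists Z.
- by move/adj_sym/H3=> [Z [? ?]]; exists Z.
Qed.

Lemma R_congr a b X Y X' Y' : peq X X' -> peq Y Y' -> R a b X Y -> R a b X' Y'.
Proof.
move=> HX HY [H1 H2 H3]; split.
- move=> E; apply: peq_trans (peq_sym HX) _; apply: peq_trans (H1 E) HY.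
- move/H2=> [Z [A B]]; exists Z; split.
  + exact: peq_trans (peq_sym HX) A.
  + exact: peq_trans (peq_sym HY) B.
- move/H3=> [Z [A B]]; exists Z; split.
  + exact: peq_trans (peq_sym HX) A.
  + exact: peq_trans (peq_sym HY) B.
Qed.

Lemma R_refl a X : R a a X X.
Proof. split; [by move=> _; apply: pe_refl|by move/far_irr|by move/adj_irr]. Qed.

Lemma R_step a b X Y : step (a :: X) (b :: Y) -> R a b X Y.
Proof.
move E1: (a :: X) => s; move E2: (b :: Y) => t st.
case: st E1 E2 => [u v x y H|u v x y H].
- case: u => [|w u] /= [-> ->] [-> ->].
  + split; first by move=> E; move: H; rewrite E => /far_irr.
    * by move=> _; exists v; split; apply: pe_refl.
    * by move=> Hadj; move: H Hadj; rewrite /far /adj; lia.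
  + apply: R_congr (pe_refl _) (peq1 (st_comm _ _ H)) (R_refl _ _).
- case: u => [|w u] /= [-> ->] [-> ->].
  + split; first by move=> E; move: H; rewrite E => /adj_irr.
    * by move=> Hf; move: H Hf; rewrite /far /adj; lia.
    * by move=> _; exists v; split; apply: pe_refl.
  + apply: R_congr (pe_refl _) (peq1 (st_braid _ _ H)) (R_refl _ _).
Qed.
Tactic Notation "pt" open_constr(H) := (eapply peq_trans; [exact H|]).
Ltac fl := unfold far, adj in *; lia.

Section Trans.
Variable d : nat.
Hypothesis IH : forall m, m < d -> S m.
Lemma IHp a b Z1 Z2 : size Z1 < d -> peq (a::Z1) (b::Z2) -> R a b Z1 Z2.
Proof. move=> h E; exact: (IH h erefl E). Qed.

Lemma C3 a c b X U Y : size X = d -> far a c -> far c b ->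
  R a c X U -> R c b U Y -> R a b X Y.
Proof.
move=> sX Hac Hcb [_ H1 _] [_ H2 _].
case: (H1 Hac) => Z1 [HX HU]; case: (H2 Hcb) => Z2 [HU2 HY].
have E := peq_trans (peq_sym HU) HU2.
have sZ : size Z1 < d by have := size_peq HX; rewrite sX /=; lia.
case: (IHp sZ E) => A1 F1 J1; split.
- move=> Eab; pt HX; apply: peq_trans _ (peq_sym HY); exact/peq_cons/A1.
- move=> Hab; case: (F1 Hab) => Z [HZ1 HZ2]; exists (c :: Z); split.
  + pt HX; pt (peq_cons c HZ1); apply: sw; fl.
  + pt HY; pt (peq_cons c HZ2); apply: sw; fl.
- move=> Hab; case: (J1 Hab) => Z [HZ1 HZ2]; exists (c :: Z); split.
  + pt HX; pt (peq_cons c HZ1); pt (@sw _ _ _ Hcb); apply: peq_cons; apply: sw; fl.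
  + pt HY; pt (peq_cons c HZ2); pt (@sw _ _ _ (far_sym Hac)); apply: peq_cons; apply: sw; fl.
Qed.

Lemma C4 a c b X U Y : size X = d -> far a c -> adj c b ->
  R a c X U -> R c b U Y -> R a b X Y.
Proof.
move=> sX Hac Hcb [_ H1 _] [_ _ H2].
case: (H1 Hac) => Z1 [HX HU]; case: (H2 Hcb) => Z2 [HU2 HY].
have E := peq_trans (peq_sym HU) HU2.
have sZ : size Z1 < d by have := size_peq HX; rewrite sX /=; lia.
have sZ2 := size_peq E; rewrite /= in sZ2.
case: (IHp sZ E) => A1 F1 J1; split.
- move=> Eab; exfalso; fl.
- move=> Hab; case: (F1 Hab) => Z [HZ1 HZ2].
  have s2 : size Z2 < d by lia.
  case: (IHp s2 HZ2) => _ F2 _; case: (F2 (far_sym Hac)) => Z3 [HZ2' HZ'].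
  exists [:: c, b & Z3]; split.
  + pt HX; pt (peq_cons c (peq_trans HZ1 (peq_cons b HZ'))); apply: br; fl.
  + pt HY; pt (peq_cons c (peq_cons b HZ2')).
    pt (peq_cons c (@sw _ _ _ (far_sym Hab))); apply: sw; fl.
- move=> Hab; case: (J1 Hab) => Z [HZ1 HZ2].
  have s2 : size Z2 < d by lia.
  case: (IHp s2 HZ2) => _ F2 _; case: (F2 (far_sym Hac)) => Z3 [HZ2' HZ'].
  have s3 : size Z < d by have := size_peq HZ'; have := size_peq HZ2'; rewrite /=; lia.
  case: (IHp s3 HZ') => _ _ J3; case: (J3 (adj_sym Hcb)) => Z4 [HZ HZ3].
  exists [:: c, b, a & Z4]; split.
  + pt HX; pt (peq_cons c (peq_trans HZ1 (peq_cons b (peq_cons a HZ)))).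
    pt (peq_cons c (peq_cons b (@sw _ _ _ Hac))).
    pt (@br _ _ _ Hcb).
    pt (peq_cons b (peq_cons c (@br _ _ _ (adj_sym Hab)))).
    apply: peq_cons; apply: sw; fl.
  + pt HY; pt (peq_cons c (peq_cons b (peq_trans HZ2' (peq_cons a HZ3)))).
    pt (peq_cons c (@br _ _ _ (adj_sym Hab))).
    pt (@sw _ _ _ (far_sym Hac)).
    pt (peq_cons a (peq_cons c (peq_cons b (@sw _ _ _ Hac)))).
    apply: peq_cons; apply: br; fl.
Qed.

Lemma C6 a c b X U Y : size X = d -> adj a c -> adj c b ->
  R a c X U -> R c b U Y -> R a b X Y.
Proof.
move=> sX Hac Hcb [_ _ H1] [_ _ H2].
case: (H1 Hac) => Z1 [HX HU]; case: (H2 Hcb) => Z2 [HU2 HY].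
have E := peq_trans (peq_sym HU) HU2.
have sZ : size (c :: Z1) < d by have := size_peq HX; rewrite sX /=; lia.
have sZ2 := size_peq E; rewrite /= in sZ2.
case: (IHp sZ E) => A1 F1 J1; split.
- move=> Eab; subst b.
  have sZ' : size Z1 < d by rewrite /= in sZ; lia.
  case: (IHp sZ' (A1 erefl)) => A2 _ _.
  pt HX; apply: peq_trans _ (peq_sym HY); apply/peq_cons/peq_cons/A2; done.
- move=> Hab; case: (F1 Hab) => Z [HZ1 HZ2].
  have s1 : size Z1 < d by rewrite /= in sZ; lia.
  have s2 : size Z2 < d by lia.
  case: (IHp s1 HZ1) => _ _ J2; case: (J2 Hcb) => Z5 [HZ1' HZa].
  case: (IHp s2 HZ2) => _ _ J3; case: (J3 (adj_sym Hac)) => Z6 [HZ2' HZb].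
  have E2 := peq_trans (peq_sym HZa) HZb.
  have s5 : size (b :: Z5) < d by have := size_peq HZ1'; rewrite /=; lia.
  case: (IHp s5 E2) => A4 _ _; have E3 := A4 erefl.
  have s5' : size Z5 < d by rewrite /= in s5; lia.
  case: (IHp s5' E3) => _ F5 _; case: (F5 (far_sym Hab)) => Z7 [HZ5 HZ6].
  exists [:: c, a, b, c & Z7]; split.
  + pt HX; pt (peq_cons c (peq_cons a (peq_trans HZ1' (peq_cons b (peq_cons c HZ5))))).
    pt (peq_cons c (@sw _ _ _ Hab)).
    pt (peq_cons c (peq_cons b (@br _ _ _ Hac))).
    pt (@br _ _ _ Hcb).
    apply/peq_cons/peq_cons/sw; fl.
  + pt HY; pt (peq_cons c (peq_cons b (peq_trans HZ2' (peq_cons a (peq_cons c HZ6))))).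
    pt (peq_cons c (@sw _ _ _ (far_sym Hab))).
    pt (peq_cons c (peq_cons a (@br _ _ _ (adj_sym Hcb)))).
    apply: br; fl.
- move=> Hab; exfalso; fl.
Qed.

Lemma R_trans a c b X U Y : size X = d -> size Y = d ->
  R a c X U -> R c b U Y -> R a b X Y.
Proof.
move=> sX sY H1 H2.
case: (trich a c) => [Eac|Hac|Hac].
- subst c; case: H1 => A _ _; exact: R_congr (peq_sym (A erefl)) (pe_refl _) H2.
- case: (trich c b) => [Ecb|Hcb|Hcb].
  + subst c; case: H2 => A _ _; exact: R_congr (pe_refl _) (A erefl) H1.
  + exact: C3 sX Hac Hcb H1 H2.
  + exact: C4 sX Hac Hcb H1 H2.
- case: (trich c b) => [Ecb|Hcb|Hcb].
  + subst c; case: H2 => A _ _; exact: R_congr (pe_refl _) (A erefl) H1.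
  + apply: R_sym; exact: C4 sY (far_sym Hcb) (adj_sym Hac) (R_sym H2) (R_sym H1).
  + exact: C6 sX Hac Hcb H1 H2.
Qed.
End Trans.

Lemma S_all d : S d.
Proof.
elim/ltn_ind: d => d IH a b X Y sX E.
move: E sX; move e1: (a :: X) => s; move e2: (b :: Y) => t E.
elim: E a X b Y e1 e2 => [s0|s0 t0 u0 st E' IHE] a X b Y e1 e2 sX.
- by subst s0; case: e2 => -> ->; apply: R_refl.
- subst s0 u0.
  have sz := size_step st; have szE := size_peq E'.
  case: t0 st E' IHE sz szE => [|c U] st E' IHE //= sz szE.
  have H1 := R_step st.
  have sU : size U = d by lia.
  have sY : size Y = d by lia.
  have H2 := IHE c U b Y erefl erefl sU.
  exact: (R_trans IH sX sY H1 H2).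
Qed.

Lemma cancel1 a X Y : peq (a :: X) (a :: Y) -> peq X Y.
Proof. by move/(S_all erefl) => [A _ _]; apply: A. Qed.
Lemma cancel_cat u X Y : peq (u ++ X) (u ++ Y) -> peq X Y.
Proof. by elim: u => //= a u IH /cancel1/IH. Qed.
Lemma rcancel1 a X Y : peq (X ++ [:: a]) (Y ++ [:: a]) -> peq X Y.
Proof.
move/peq_rev; rewrite !rev_cat /= => /cancel1/peq_rev; by rewrite !revK.
Qed.
Lemma key_far a b X Y : far a b -> peq (a :: X) (b :: Y) -> exists Z, peq X (b::Z) /\ peq Y (a::Z).
Proof. by move=> H /(S_all erefl) [_ F _]; apply: F. Qed.
Lemma key_adj a b X Y : adj a b -> peq (a :: X) (b :: Y) -> exists Z, peq X (b::a::Z) /\ peq Y (a::b::Z).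
Proof. by move=> H /(S_all erefl) [_ _ F]; apply: F. Qed.

Lemma nseq_cons_cat m (j : nat) W : nseq m j ++ j :: W = j :: (nseq m j ++ W).
Proof. by elim: m => //= m ->. Qed.

Lemma lcm_pow k j m u v : adj k j -> 0 < m -> peq (k :: u) (nseq m j ++ v) ->
  exists Z, peq v (k :: j :: Z).
Proof.
move=> H; elim: m u => // m IH u _ /= E.
case: (key_adj H E) => Z0 [_ HZ].
clear E; move: IH HZ; case: m => [|m] IH HZ; first by exists Z0.
exact: (IH (j :: Z0) erefl (peq_sym HZ)).
Qed.

Lemma pow_rel j k m Z : adj j k -> peq (nseq m j ++ k :: j :: Z) (k :: j :: (nseq m k ++ Z)).
Proof.
move=> H; elim: m => [|m IH] /=; first exact: pe_refl.
pt (peq_cons j IH); exact: br.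
Qed.

Lemma far_pow k j m v : far k j -> peq (nseq m j ++ k :: v) (k :: nseq m j ++ v).
Proof.
move=> H; elim: m => [|m IH] /=; first exact: pe_refl.
pt (peq_cons j IH); apply: sw; exact: far_sym.
Qed.

Lemma step_nseq k x t : step (nseq k x) t -> False.
Proof.
move E: (nseq k x) => s st; case: st E => u v a b H E.
- have : a \in nseq k x by rewrite E mem_cat inE eqxx orbT.
  have : b \in nseq k x by rewrite E mem_cat !inE eqxx !orbT.
  rewrite !mem_nseq => /andP [_ /eqP Eb] /andP [_ /eqP Ea]; subst; exact: far_irr H.
- have : a \in nseq k x by rewrite E mem_cat inE eqxx orbT.
  have : b \in nseq k x by rewrite E mem_cat !inE eqxx !orbT.
  rewrite !mem_nseq => /andP [_ /eqP Eb] /andP [_ /eqP Ea]; subst; exact: adj_irr H.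
Qed.

Lemma nseq_peq k x t : peq (nseq k x) t -> t = nseq k x.
Proof.
move E: (nseq k x) => s st; case: st E => // s0 t0 u0 st _ E.
by subst; case: (step_nseq st).
Qed.

Lemma mon_main m i j : 0 < m -> forall W, peq (W ++ nseq m i) (nseq m j ++ W) ->
  peq (W ++ [:: i]) (j :: W).
Proof.
move=> Hm W; move: {2}(size W) (leqnn (size W)) => d; elim: d W j => [|d IH] W j.
- case: W => //= _; rewrite cats0 => E.
  move: Hm E; case: m => // m _ /= E.
  case: (S_all erefl E) => _ F J.
  case: (trich i j) => [->|Hij|Hij]; first exact: pe_refl.
  + case: (F Hij) => Z [HZ _]; clear -HZ Hij; move/nseq_peq: HZ; case: m => //= m [Eij _].
    by move: Hij; rewrite Eij => /far_irr.
  + case: (J Hij) => Z [HZ _]; clear -HZ Hij; move/nseq_peq: HZ; case: m => //= m [Eij _].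
    by move: Hij; rewrite Eij => /adj_irr.
case: W => [|c W'] sW E.
- apply: (IH [::] j) => //.
rewrite /= in sW E.
case: (trich c j) => [Ecj|Hcj|Hcj].
- subst c; move: E; rewrite nseq_cons_cat => /cancel1 E.
  exact/peq_cons/(IH W' j sW E).
- have E2 := cancel1 (peq_trans E (far_pow _ _ Hcj)).
  have := IH W' j sW E2 => H; rewrite /=; pt (peq_cons c H); exact: sw.
- case: (lcm_pow Hcj Hm E) => Z /cancel1 HW.
  have E1 : peq [:: c, j & Z ++ nseq m i] [:: c, j & nseq m c ++ Z].
    pt (peq_cons c (peq_sym (peq_catr (nseq m i) HW))).
    pt E; pt (peq_catl (nseq m j) (peq_cons c HW)).
    exact: pow_rel (adj_sym Hcj).
  have E2 := cancel1 (cancel1 E1).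
  have sZ : size Z <= d by have := size_peq HW; rewrite /=; lia.
  have H := IH Z c sZ E2.
  rewrite /=; pt (peq_cons c (peq_catr [:: i] HW)); rewrite /=.
  pt (peq_cons c (peq_cons j H)); pt (@br _ _ _ Hcj).
  exact/peq_cons/peq_cons/peq_sym.
Qed.

Lemma comm_seq x s : (forall y, y \in s -> far x y) -> peq (s ++ [:: x]) (x :: s).
Proof.
elim: s => [|y s IH] H /=; first exact: pe_refl.
have IH2 : peq (s ++ [:: x]) (x :: s) by apply: IH => z hz; apply: H; rewrite inE hz orbT.
pt (peq_cons y IH2).
apply: sw; apply: far_sym; apply: H; exact: mem_head.
Qed.

Lemma comm_seq_cat x s T : (forall y, y \in s -> far x y) -> peq (s ++ x :: T) (x :: s ++ T).
Proof. by move=> H; have := peq_catr T (comm_seq H); rewrite -catA. Qed.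

Section Delta.
Variable N : nat.
Definition delta := iota 0 N.
Definition dpow c := flatten (nseq c delta).
Definition Lw := dpow N.+1.
Definition Lp r := flatten (nseq r Lw).

Lemma dpowS c : dpow c.+1 = delta ++ dpow c. Proof. by []. Qed.
Lemma dpowD a b : dpow (a + b) = dpow a ++ dpow b.
Proof. by rewrite /dpow nseqD flatten_cat. Qed.
Lemma LpD a b : Lp (a + b) = Lp a ++ Lp b.
Proof. by rewrite /Lp nseqD flatten_cat. Qed.
Lemma LpS r : Lp r.+1 = Lw ++ Lp r. Proof. by []. Qed.

Lemma shift k : k.+1 < N -> peq (delta ++ [:: k]) (k.+1 :: delta).
Proof.
move=> Hk; rewrite /delta.
have -> : N = k + (N - k.+2).+2 by lia.
rewrite iotaD /= add0n -!catA /=.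
set r := iota k.+2 _.
have H1 : peq (iota 0 k ++ [:: k, k.+1 & r ++ [:: k]]) (iota 0 k ++ [:: k, k.+1, k & r]).
  apply/peq_catl/peq_cons/peq_cons/comm_seq => y; rewrite mem_iota => /andP [h _].
  by rewrite /far; lia.
pt H1; pt (peq_catl (iota 0 k) (@br k k.+1 r ltac:(rewrite /adj; lia))).
apply: comm_seq_cat => y; rewrite mem_iota => /andP [_ h]; rewrite /far; lia.
Qed.

Lemma dpow_shift c k : k + c < N -> peq (dpow c ++ [:: k]) ((k + c) :: dpow c).
Proof.
elim: c => [|c IH] H; first by rewrite addn0; exact: pe_refl.
rewrite dpowS -catA; pt (peq_catl delta (IH ltac:(lia))).
have := peq_catr (dpow c) (shift (k := k + c) ltac:(lia)); rewrite -catA addnS; exact.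
Qed.

Lemma catr_eq s t y s' t' : peq s t -> s' = s ++ y -> t' = t ++ y -> peq s' t'.
Proof. by move=> H -> ->; apply: peq_catr. Qed.

Lemma d2_step m (p : seq nat) T : (forall y, y \in p -> far m.+1 y) ->
  peq (p ++ m :: m.+1 :: p ++ m :: m.+1 :: T) (p ++ m :: p ++ m :: [:: m.+1, m & T]).
Proof.
move=> Hp; apply/peq_catl/peq_cons.
have H := peq_sym (@comm_seq_cat m.+1 p [:: m, m.+1 & T] Hp); pt H.
apply: peq_catl; apply: br; rewrite /adj; lia.
Qed.

Lemma d2 m : peq (iota 0 m.+1 ++ iota 0 m.+1 ++ [:: m]) (0 :: iota 0 m.+1 ++ iota 0 m.+1).
Proof.
elim: m => [|m IH]; first exact: pe_refl.
have Edm : iota 0 m.+1 = iota 0 m ++ [:: m] by rewrite -addn1 iotaD.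
have E2 : iota 0 m.+2 = iota 0 m ++ [:: m; m.+1] by rewrite -addn2 iotaD.
rewrite Edm -!catA /= in IH.
rewrite E2 -!catA /=.
have Hp : forall y, y \in iota 0 m -> far m.+1 y by move=> y; rewrite mem_iota /far; lia.
pt (d2_step [:: m.+1] Hp).
apply: (@peq_trans _ (0 :: iota 0 m ++ m :: iota 0 m ++ [:: m; m.+1; m])); last first.
  apply: peq_sym; apply: peq_cons; exact: (d2_step [::] Hp).
have H1 : peq (iota 0 m ++ m :: iota 0 m ++ [:: m; m.+1; m; m.+1])
              (iota 0 m ++ m :: iota 0 m ++ [:: m; m; m.+1; m]).
  apply/peq_catl/peq_cons/peq_catl/peq_cons; apply: br; rewrite /adj; lia.
pt H1.
apply: (catr_eq (y := [:: m.+1; m]) IH).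
  by rewrite -!catA cat_cons -!catA.
by rewrite cat_cons -!catA cat_cons -!catA.
Qed.

Hypothesis NP : 0 < N.

Lemma dpow2 : peq (dpow 2 ++ [:: N.-1]) (0 :: dpow 2).
Proof.
have := d2 N.-1; rewrite prednK // => H. rewrite /dpow /= cats0 /delta -catA; exact: H.
Qed.

Lemma peq_eq s t s' t' : peq s t -> s' = s -> t' = t -> peq s' t'.
Proof. by move=> H -> ->. Qed.

Lemma Lw_central1 k : k < N -> peq (Lw ++ [:: k]) (k :: Lw).
Proof.
move=> Hk; set c := N.-1 - k.
have EL : Lw = dpow k ++ dpow 2 ++ dpow c by rewrite /Lw -!dpowD; congr dpow; rewrite /c; lia.
rewrite EL.
apply: (@peq_trans _ (dpow k ++ dpow 2 ++ (N.-1 :: dpow c))).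
  apply: (peq_eq (peq_catl (dpow k) (peq_catl (dpow 2) (@dpow_shift c k ltac:(rewrite /c; lia))))).
    by rewrite -?catA.
  by have -> : k + c = N.-1 by rewrite /c; lia.
apply: (@peq_trans _ (dpow k ++ 0 :: dpow 2 ++ dpow c)).
  apply: (peq_eq (peq_catl (dpow k) (peq_catr (dpow c) dpow2))).
  by rewrite -!catA.
  by rewrite cat_cons.
have H0 : 0 + k < N by lia.
have H := peq_catr (dpow 2 ++ dpow c) (@dpow_shift k 0 H0).
apply: (peq_eq H); first by rewrite -catA.
by rewrite add0n.
Qed.

Definition allN (s : seq nat) := forall x, x \in s -> x < N.

Lemma allN_cat s t : allN s -> allN t -> allN (s ++ t).
Proof. by move=> Hs Ht x; rewrite mem_cat => /orP [/Hs|/Ht]. Qed.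

Lemma Lw_central s : allN s -> peq (Lw ++ s) (s ++ Lw).
Proof.
elim: s => [|x s IH] H /=; first by rewrite cats0; exact: pe_refl.
have := peq_catr s (Lw_central1 (H x (mem_head _ _))); rewrite -catA /= => H1.
pt H1; apply: peq_cons; apply: IH => y hy; apply: H; exact: mem_behead.
Qed.

Lemma Lp_central r s : allN s -> peq (Lp r ++ s) (s ++ Lp r).
Proof.
move=> H; elim: r => [|r IH] /=; first by rewrite cats0; exact: pe_refl.
rewrite LpS -catA; pt (peq_catl Lw IH); rewrite catA; pt (peq_catr (Lp r) (Lw_central H)).
rewrite -catA; exact: pe_refl.
Qed.

Lemma allN_iota m : m <= N -> allN (iota 0 m).
Proof. by move=> h x; rewrite mem_iota; lia. Qed.
Lemma allN_dpow c : allN (dpow c).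
Proof.
elim: c => [|c IH] //; rewrite dpowS; apply: allN_cat IH; exact: allN_iota.
Qed.
Lemma allN_Lw : allN Lw. Proof. exact: allN_dpow. Qed.
Lemma allN_Lp r : allN (Lp r).
Proof. elim: r => [|r IH] //; rewrite LpS; exact: allN_cat allN_Lw IH. Qed.

Definition Dk k := dpow (N - (N.-1 - k)) ++ iota 0 N.-1 ++ dpow (N.-1 - k).

Lemma allN_Dk k : allN (Dk k).
Proof.
apply: allN_cat; first exact: allN_dpow.
apply: allN_cat; last exact: allN_dpow. apply: allN_iota; lia.
Qed.

Lemma Dk_div k : k < N -> peq (Dk k ++ [:: k]) Lw.
Proof.
move=> Hk; set c := N.-1 - k.
have -> : Lw = dpow (N - c) ++ dpow c.+1 by rewrite /Lw -dpowD; congr dpow; lia.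
rewrite /Dk -!catA; apply: peq_catl.
have Ed : delta = iota 0 N.-1 ++ [:: N.-1].
  by rewrite /delta -{1}(prednK NP) -addn1 iotaD.
rewrite dpowS Ed -catA /=; apply: peq_catl.
have -> : N.-1 = k + c by rewrite /c; lia.
rewrite addKn; apply: dpow_shift; rewrite /c; lia.
Qed.

Lemma Dk_div' k : k < N -> peq (k :: Dk k) Lw.
Proof.
move=> Hk; apply: (@rcancel1 k).
have := peq_catl [:: k] (Dk_div Hk); rewrite /= => H; pt H.
exact: peq_sym (Lw_central1 Hk).
Qed.

End Delta.

Section Group.
Variable n : nat.
Hypothesis n2 : 2 <= n.
Local Notation N := n.-1.
Lemma NP : 0 < N. Proof. lia. Qed.

Definition yl (x : bletter n) : seq nat :=
  if x.2 then Lw N ++ [:: val x.1] else Dk N (val x.1).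
Definition Pw (w : bword n) := flatten (map yl w).
Definition Erel (u v : bword n) := peq (Lp N (size v) ++ Pw u) (Lp N (size u) ++ Pw v).

Lemma allN_yl x : allN N (yl x).
Proof.
rewrite /yl; case: x => k [] /=; last exact: allN_Dk NP _.
apply: allN_cat; first exact: allN_Lw NP.
by move=> y; rewrite inE => /eqP ->; apply: ltn_ord.
Qed.

Lemma allN_Pw w : allN N (Pw w).
Proof. elim: w => [|x w IH]; first by move=> y. rewrite /Pw /= -/(Pw w). apply: allN_cat. apply: allN_yl. exact: IH. Qed.

Lemma Pw_cat u v : Pw (u ++ v) = Pw u ++ Pw v.
Proof. by rewrite /Pw map_cat flatten_cat. Qed.

Lemma Pw_pos U : peq (Pw (pos_word U)) (Lp N (size U) ++ map val U).
Proof.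
elim: U => [|k U IH] /=; first exact: pe_refl.
rewrite /Pw /= -/(Pw _) /yl /= -catA.
apply: peq_trans (peq_catl (Lw N) (peq_catl [:: val k] IH)) _.
rewrite LpS -catA; apply: peq_catl; rewrite catA.
have H : allN N [:: val k] by move=> y; rewrite inE => /eqP ->; apply: ltn_ord.
apply: (peq_eq (peq_catr (map val U) (peq_sym (Lp_central NP (size U) H)))) => //; by rewrite -catA.
Qed.

Lemma Pw_cancel x : peq (Pw [:: x; binv x]) (Lp N 2).
Proof.
case: x => k [].
- rewrite /Pw /binv /yl /= cats0 /Lp /= cats0 -catA; apply: peq_catl.
  have := Dk_div' NP (ltn_ord k); by [].
- rewrite /Pw /binv /yl /= cats0 /Lp /= cats0 catA.
  have H1 := peq_catr [:: val k] (peq_sym (Lw_central NP (@allN_Dk _ NP (val k)))).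
  apply: peq_trans H1 _; rewrite -catA; apply: peq_catl.
  have := Dk_div NP (ltn_ord k); by [].
Qed.

Lemma Erel_sym u v : Erel u v -> Erel v u.
Proof. exact: peq_sym. Qed.

Lemma Lp_comm a b : Lp N a ++ Lp N b = Lp N b ++ Lp N a.
Proof. by rewrite -!LpD addnC. Qed.

Lemma Erel_trans u v w : Erel u v -> Erel v w -> Erel u w.
Proof.
rewrite /Erel => H1 H2.
apply: (@cancel_cat (Lp N (size v))); rewrite !catA.
rewrite Lp_comm -catA; apply: peq_trans (peq_catl _ H1) _.
rewrite catA Lp_comm -catA; apply: peq_trans (peq_catl _ H2) _.
rewrite catA Lp_comm -catA; exact: pe_refl.
Qed.

Lemma Erel_same u v a b : size a = size b -> peq (Pw a) (Pw b) ->
  Erel (u ++ a ++ v) (u ++ b ++ v).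
Proof.
move=> Hs H; rewrite /Erel !size_cat Hs !Pw_cat; apply/peq_catl/peq_catl/peq_catr; exact: H.
Qed.

Lemma pos_same (s t : seq 'I_n.-1) : size s = size t -> peq (map val s) (map val t) ->
  peq (Pw (pos_word s)) (Pw (pos_word t)).
Proof.
move=> Hs H; apply: peq_trans (Pw_pos s) _; apply: peq_trans _ (peq_sym (Pw_pos t)).
rewrite Hs; exact: peq_catl.
Qed.

Lemma Erel_rel u v a b : braid_rel a b -> Erel (u ++ a ++ v) (u ++ b ++ v).
Proof.
case.
- move=> x; rewrite /Erel !size_cat !Pw_cat /=.
  have H := Pw_cancel x.
  apply: peq_trans (peq_catl _ (peq_catl _ (peq_catr (Pw v) H))) _.
  have H2 := peq_catr (Pw v) (peq_sym (Lp_central NP 2 (@allN_Pw u))).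
  apply: peq_trans (peq_catl _ (peq_eq H2 (catA _ _ _) erefl)) _.
  rewrite -(catA (Lp N 2)) catA -LpD.
  have -> : size u + (0 + size v) + 2 = size u + (2 + size v) by lia.
  exact: pe_refl.
- move=> i j H; apply: Erel_same => //.
  apply: (pos_same (s := [:: i; j]) (t := [:: j; i])) => //; exact: sw.
- move=> i j H; apply: Erel_same => //.
  apply: (pos_same (s := [:: i; j; i]) (t := [:: j; i; j])) => //; apply: br.
  by rewrite /adj /= H eqxx.
Qed.

Lemma braid_Erel u v : braid_eq u v -> Erel u v.
Proof.
elim=> [w|{}u {}v _ IH|{}u {}v w _ IH1 _ IH2|{}u {}v a b H].
- exact: pe_refl.
- exact: Erel_sym.
- exact: Erel_trans IH1 IH2.
- exact: Erel_rel.
Qed.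

Lemma embed (U V : seq 'I_n.-1) : braid_eq (pos_word U) (pos_word V) ->
  peq (map val U) (map val V).
Proof.
move/braid_Erel; rewrite /Erel !size_map => H.
have H1 := peq_trans (peq_catl _ (peq_sym (Pw_pos U))) (peq_trans H (peq_catl _ (Pw_pos V))).
rewrite !catA -!LpD addnC in H1; exact: cancel_cat H1.
Qed.
End Group.

Lemma map_split (T : Type) (f : T -> nat) U u w : map f U = u ++ w ->
  exists U1 U2, [/\ U = U1 ++ U2, map f U1 = u & map f U2 = w].
Proof.
move=> E; exists (take (size u) U), (drop (size u) U); split.
- by rewrite cat_take_drop.
- by rewrite map_take E take_size_cat.
- by rewrite map_drop E drop_size_cat.
Qed.

Lemma lift_step n (U : seq 'I_n.-1) t : step (map val U) t ->
  exists V, t = map val V /\ braid_eq (pos_word U) (pos_word V).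
Proof.
move E: (map val U) => s st; case: st E => u v a b H E.
- case: (map_split E) => U1 [U2 [-> <- E2]].
  case: U2 E2 => [|X [|Y V']] //= [EX EY EV].
  exists (U1 ++ [:: Y, X & V']); split; first by rewrite map_cat /= EX EY EV.
  rewrite /pos_word !map_cat /=.
  apply: (beq_rel _ _ (a := [:: (X, true); (Y, true)]) (b := [:: (Y, true); (X, true)])).
  apply: brel_comm; by move: H; rewrite -EX -EY.
- case: (map_split E) => U1 [U2 [-> <- E2]].
  case: U2 E2 => [|X [|Y [|X' V']]] //= [EX EY EX' EV].
  have EXX : X' = X by apply: val_inj; rewrite /= EX' EX.
  subst X'.
  exists (U1 ++ [:: Y, X, Y & V']); split; first by rewrite map_cat /= EX EY EV.
  rewrite /pos_word !map_cat /=.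
  move: H; rewrite /adj -EX -EY => /orP [/eqP H|/eqP H].
  + apply: (beq_rel _ _ (a := [:: (X, true); (Y, true); (X, true)])
                        (b := [:: (Y, true); (X, true); (Y, true)])).
    exact: brel_braid.
  + apply: beq_sym.
    apply: (beq_rel _ _ (a := [:: (Y, true); (X, true); (Y, true)])
                        (b := [:: (X, true); (Y, true); (X, true)])).
    exact: brel_braid.
Qed.

Lemma lift_gen n s t : peq s t -> forall U : seq 'I_n.-1, s = map val U ->
  exists V, t = map val V /\ braid_eq (pos_word U) (pos_word V).
Proof.
elim=> [s0|s0 t0 u0 st _ IH] U E.
- by exists U; split => //; apply: beq_refl.
- subst s0; case: (lift_step st) => V1 [E1 B1].
  case: (IH V1 E1) => V2 [E2 B2]; exists V2; split => //.
  exact: beq_trans B1 B2.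
Qed.

Lemma lift n (U V : seq 'I_n.-1) : peq (map val U) (map val V) ->
  braid_eq (pos_word U) (pos_word V).
Proof.
move=> H; case: (lift_gen H erefl) => V' [E B].
by have -> : V = V' by apply: (inj_map val_inj).
Qed.

Theorem theorem2p12 (n : nat) (i j : 'I_n.-1) (m : nat) (W : seq 'I_n.-1) :
  (2 <= n)%N -> (1 <= m)%N ->
  braid_eq (pos_word (W ++ nseq m i)) (pos_word (nseq m j ++ W)) ->
  braid_eq (pos_word (W ++ [:: i])) (pos_word (j :: W)).
Proof.
move=> n2 m1 H; apply: lift.
have := embed n2 H; rewrite !map_cat !map_nseq => H'.
rewrite /=. have K := mon_main m1 H'. exact K.
Qed.
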